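(* Let $H$ be a finite graph of girth at least $5$ and minimum degree at least $4$. Then for every $t\in\mathbb N$, every proper layered wheel $W$ of girth at least $5$ contains an $H$-free induced subgraph of treewidth at least $t$.
   Context: A layered wheel is a countably infinite graph $W$ on the same vertex set as a countably infinite, locally finite rooted tree $T$ embedded in the plane, such that: (1) for every natural number $n$, the set $L_n$ (layer) of nodes at distance $n$ from the root induces in $W$ a finite path visiting $L_n$ in the left-to-right order of the embedding; edges inside layers form the set $E_L$; (2) every edge not in $E_L$ joins two nodes in ancestor–descendant relation in $T$; (3) there is a finite bound on the length of paths in $T$ consisting only of degree-$2$ nodes of $T$. $W$ is proper if for every $i\neq j$ there is at least one edge of $W$ between $L_i$ and $L_j$. A graph is $H$-free if no induced subgraph is isomorphic to $H$. The girth is the length of a shortest cycle. *)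

(* Defs.v *)
From mathcomp Require Import all_boot.
Set Implicit Arguments. Unset Strict Implicit. Unset Printing Implicit Defensive.

Definition simple_graph (G : Type) (e : rel G) : Prop :=
  symmetric e /\ irreflexive e.

Definition has_cycle_len (G : eqType) (e : rel G) (k : nat) : Prop :=
  exists s : seq G, [/\ size s = k, uniq s & cycle e s].

Definition girth_ge (G : eqType) (e : rel G) (g : nat) : Prop :=
  forall l, 3 <= l -> l < g -> ~ has_cycle_len e l.

Definition min_deg_ge (G : finType) (e : rel G) (d : nat) : Prop :=
  forall x : G, d <= #|[set y | e x y]|.

Definition has_induced_copy (H : finType) (eH : rel H) (G : Type) (eG : rel G)
  : Prop :=
  exists f : H -> G, injective f /\ forall x y, eH x y = eG (f x) (f y).

Definition H_free (H : finType) (eH : rel H) (G : Type) (eG : rel G) : Prop :=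
  ~ has_induced_copy eH eG.

Definition is_tree (I : finType) (te : rel I) : Prop :=
  [/\ simple_graph te, (forall i j, connect te i j)
    & forall l, 3 <= l -> ~ has_cycle_len te l].

Definition tree_decomposition (G : finType) (e : rel G)
  (I : finType) (te : rel I) (bag : I -> {set G}) : Prop :=
  [/\ is_tree te,
      (forall v, exists i, v \in bag i),
      (forall u v, e u v -> exists i, (u \in bag i) && (v \in bag i))
    & (forall v i j, v \in bag i -> v \in bag j ->
         connect [rel a b | [&& te a b, v \in bag a & v \in bag b]] i j)].

(* treewidth of (G,e) is at least k: every tree decomposition has a bag of
   size at least k+1 (i.e. width >= k) *)
Definition tw_ge (G : finType) (e : rel G) (k : nat) : Prop :=
  forall (I : finType) (te : rel I) (bag : I -> {set G}),
    tree_decomposition e te bag -> exists i, k < #|bag i|.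

Definition induced_on (adj : rel nat) (S : seq nat) : rel (seq_sub S) :=
  fun x y => adj (val x) (val y).
Arguments induced_on adj S : clear implicits.

(* The rooted tree T has vertex set nat, root r, parent function par, and
   depth function dep (dep v = distance from v to the root in T).
   The plane embedding is encoded by a position function pos giving the
   left-to-right order of each layer; it is compatible with the tree
   (children of left nodes are to the left of children of right nodes). *)

Definition rooted_tree (r : nat) (par dep : nat -> nat) : Prop :=
  dep r = 0 /\ forall v, v <> r -> dep v = (dep (par v)).+1.

Definition locally_finite (r : nat) (par : nat -> nat) : Prop :=
  forall v, exists m, forall c, c <> r -> par c = v -> c < m.

Definition plane_order (r : nat) (par dep pos : nat -> nat) : Prop :=
  (forall u v, dep u = dep v -> u <> v -> pos u <> pos v) /\
  (forall u v, u <> r -> v <> r -> dep u = dep v ->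
     pos (par u) < pos (par v) -> pos u < pos v).

Definition consec (dep pos : nat -> nat) (u v : nat) : Prop :=
  [/\ dep u = dep v, pos u < pos v &
      ~ exists w, [/\ dep w = dep u, pos u < pos w & pos w < pos v]].

Definition ancestor (par dep : nat -> nat) (u v : nat) : Prop :=
  dep u < dep v /\ iter (dep v - dep u) par v = u.

Definition tadj (r : nat) (par : nat -> nat) : rel nat :=
  fun u v => ((u != r) && (par u == v)) || ((v != r) && (par v == u)).

Definition tdeg2 (r : nat) (par : nat -> nat) (v : nat) : Prop :=
  exists a b, [/\ a <> b, tadj r par v a, tadj r par v b &
                  forall c, tadj r par v c -> c = a \/ c = b].

Definition layered_wheel (adj : rel nat) (r : nat) (par dep pos : nat -> nat)
  : Prop :=
  simple_graph adj /\
  rooted_tree r par dep /\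
  locally_finite r par /\
  plane_order r par dep pos /\
  (forall u v, dep u = dep v ->
     (adj u v <-> consec dep pos u v \/ consec dep pos v u)) /\
  (forall u v, adj u v -> dep u <> dep v ->
     ancestor par dep u v \/ ancestor par dep v u) /\
  (exists B, forall x s, uniq (x :: s) -> path (tadj r par) x s ->
     (forall y, y \in x :: s -> tdeg2 r par y) -> size s <= B).

Definition proper_lw (adj : rel nat) (dep : nat -> nat) : Prop :=
  forall i j, i <> j -> exists u v, [/\ dep u = i, dep v = j & adj u v].

(* Main.v *)
Require Import Defs.
From mathcomp Require Import all_boot.
From mathcomp Require Import zify.
From Stdlib Require Import Classical.
Set Implicit Arguments. Unset Strict Implicit. Unset Printing Implicit Defensive.

Definition relY (T : finType) (e : rel T) (Y : {set T}) : rel T :=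
  fun a b => [&& e a b, a \in Y & b \in Y].

Definition connY (T : finType) (e : rel T) (Y : {set T}) : Prop :=
  forall a b, a \in Y -> b \in Y -> connect (relY e Y) a b.

Section Tree.
Variable I : finType.
Variable te : rel I.
Hypothesis te_sym : symmetric te.
Hypothesis te_irr : irreflexive te.
Hypothesis te_acyc : forall l, 3 <= l -> ~ has_cycle_len te l.

Lemma path_avoid (Y : {set I}) (l p : I) :
  (forall q, q \in Y -> te l q -> q = p) ->
  forall s a, a != l -> last a s != l -> uniq (a :: s) ->
  path (relY te Y) a s -> path (relY te (Y :\ l)) a s.
Proof.
move=> Hleaf; elim=> [//|c s IH] a Hal Hlast Hu /= /andP [Hac Hp].
have Hcl : c != l.
  apply/eqP=> Ecl; subst c.
  case: s IH Hlast Hu Hp => [|d s] IH Hlast Hu Hp; first by rewrite /= eqxx in Hlast.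
  move: Hac Hp => /and3P [Hte Ha _] /= /andP [/and3P [Hld _ Hd] _].
  have Ea : a = p by apply: Hleaf; rewrite // te_sym.
  have Ed : d = p by apply: Hleaf.
  by move: Hu; rewrite /= !inE Ea Ed eqxx !orbT.
move: Hu => /= /andP [Hnin Hu].
rewrite IH // andbT.
by move: Hac => /and3P [H1 Ha Hc]; rewrite /relY /= H1 !inE Hal Hcl Ha Hc.
Qed.

Lemma conn_remove_leaf (Y : {set I}) (l p : I) :
  (forall q, q \in Y -> te l q -> q = p) ->
  connY te Y -> connY te (Y :\ l).
Proof.
move=> Hleaf HY a b /setD1P [Hal Ha] /setD1P [Hbl Hb].
have /connectP [s Hs Eb] := HY a b Ha Hb.
move: Hbl; rewrite Eb => Hbl.
case: (shortenP Hs) Hbl => s' Hs' Hu _ Hbl.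
apply/connectP; exists s' => //.
exact: (path_avoid Hleaf Hal Hbl Hu Hs').
Qed.


Lemma no_back (l p q : I) s : uniq (l :: p :: s) -> path te l (p :: s) ->
  q \in s -> te l q -> False.
Proof.
move=> Hu Hp Hq Hlq; case/splitPr: Hq Hu Hp => s1 s2 Hu Hp.
have E : l :: p :: s1 ++ q :: s2 = (l :: p :: rcons s1 q) ++ s2
  by rewrite /= cat_rcons.
apply: (te_acyc (l := size (l :: p :: rcons s1 q))); first by rewrite /= size_rcons.
exists (l :: p :: rcons s1 q); split => //.
  by move: Hu; rewrite E cat_uniq => /andP [].
have : path te l ((p :: rcons s1 q) ++ s2) by rewrite /= cat_rcons.
rewrite cat_path => /andP [H1 _].
have -> : cycle te (l :: p :: rcons s1 q) = path te l (rcons (p :: rcons s1 q) l) by [].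
by rewrite rcons_path H1 /= last_rcons te_sym.
Qed.

Lemma leaf_exists (X : {set I}) : connY te X -> 1 < #|X| ->
  exists l p, [/\ l \in X, p \in X, te l p & forall q, q \in X -> te l q -> q = p].
Proof.
move=> HX HX2; apply: NNPP => Hn.
have Hnl : forall l p, l \in X -> p \in X -> te l p ->
    exists q, [/\ q \in X, te l q & q != p].
  move=> l p Hl Hp Hlp; apply: NNPP => Hq; apply: Hn; exists l, p; split=> // q Hq1 Hq2.
  by apply: NNPP => Hne; apply: Hq; exists q; split => //; apply/eqP.
have Hgrow : forall n, exists l p s, [/\ uniq (l :: p :: s),
    path (relY te X) l (p :: s) & size s = n].
  elim=> [|n [l [p [s [Hu Hp Hs]]]]].
    case/card_gt1P: HX2 => a [b [Ha Hb Hab]].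
    have /connectP [[|c s] Hs Eb] := HX a b Ha Hb; first by rewrite /= Eb eqxx in Hab.
    move: Hs => /= /andP [Hac _].
    exists a, c, [::]; split => //=; rewrite ?Hac ?andbT //.
    move: Hac => /and3P [Hac _ _].
    by rewrite inE; apply/eqP => Eac; rewrite Eac te_irr in Hac.
  move: (Hp) => /= /andP [/and3P [Hlp Hl Hpx] _].
  have [q [Hq Hlq Hqp]] := Hnl l p Hl Hpx Hlp.
  have Hqs : q \notin l :: p :: s.
    rewrite !inE !negb_or Hqp /=; apply/andP; split.
      by apply/eqP => Eq; rewrite Eq te_irr in Hlq.
    apply/negP => Hqs; apply: (no_back Hu _ Hqs Hlq).
    by apply: (sub_path _ Hp) => x y /and3P [].
  exists q, l, (p :: s); split=> //=; last by rewrite Hs.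
    by rewrite Hqs.
  move: Hp => /= /andP [-> ->]; by rewrite /relY te_sym Hlq Hq Hl.
have [l [p [s [Hu _ Hs]]]] := Hgrow #|I|.
move/card_uniqP: Hu => Hc.
have := max_card (mem (l :: p :: s)); rewrite Hc /= Hs.
by rewrite ltnNge leqnSn.
Qed.


Lemma first_step (R : rel I) l b : connect R l b -> b != l -> exists c, R l c.
Proof.
move=> /connectP [[|c s] Hs ->]; first by rewrite eqxx.
by move: Hs => /= /andP [H _]; exists c.
Qed.

Lemma helly n : forall (X : {set I}) (Ts : seq {set I}), #|X| <= n -> connY te X ->
  Ts != [::] ->
  (forall T, T \in Ts -> [/\ T \subset X, (exists a, a \in T) & connY te T]) ->
  (forall T T', T \in Ts -> T' \in Ts -> exists a, (a \in T) && (a \in T')) ->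
  exists x, forall T, T \in Ts -> x \in T.
Proof.
elim: n => [|n IH] X Ts HXn HX Hne HT HP.
  case: Ts Hne HT HP => [//|T0 Ts] _ HT _.
  have [Hs [a Ha] _] := HT T0 (mem_head _ _).
  have HaX : a \in X by apply: (subsetP Hs).
  have : 0 < #|X| by apply/card_gt0P; exists a.
  by rewrite ltnNge HXn.
case: (leqP #|X| 1) => HX1.
  case: Ts Hne HT HP => [//|T0 Ts] _ HT HP.
  have [Hs [a Ha] _] := HT T0 (mem_head _ _).
  have HaX : a \in X by apply: (subsetP Hs).
  exists a => T HTin.
  have [b /andP [Hb1 Hb2]] := HP T0 T (mem_head _ _) HTin.
  have HbX : b \in X by apply: (subsetP Hs).
  have := (card_le1P HX1) a HaX b; rewrite HbX inE => /esym/eqP Eb.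
  by rewrite -Eb.
have [l [p [HlX HpX Hlp Hleaf]]] := leaf_exists HX HX1.
case: (classic (exists T, T \in Ts /\ forall a, a \in T -> a = l)) => [[T1 [HT1 Hl1]]|Hno].
  exists l => T HTin.
  have [a /andP [Ha1 Ha2]] := HP T1 T HT1 HTin.
  by rewrite -(Hl1 a Ha1).
have Hoth : forall T, T \in Ts -> exists a, (a \in T) && (a != l).
  move=> T HTin; apply: NNPP => Hn; apply: Hno; exists T; split=> // a Ha.
  by apply: NNPP => Hal; apply: Hn; exists a; rewrite Ha /=; apply/eqP.
have Hpl : p != l by apply/eqP => E; rewrite E te_irr in Hlp.
have HpT : forall T, T \in Ts -> l \in T -> p \in T.
  move=> T HTin HlT.
  have [Hs _ HcT] := HT T HTin.
  have [b /andP [HbT Hbl]] := Hoth T HTin.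
  have [c /and3P [Hlc _ HcT']] := first_step (HcT l b HlT HbT) Hbl.
  by rewrite -(Hleaf c (subsetP Hs c HcT') Hlc).
have [x Hx] : exists x, forall T, T \in [seq T :\ l | T <- Ts] -> x \in T.
  apply: (IH (X :\ l)).
- by move: HXn; rewrite (cardsD1 l X) HlX.
- exact: (conn_remove_leaf Hleaf HX).
- by case: Ts Hne {HT HP Hno Hoth HpT}.
- move=> T' /mapP [T HTin ->].
  have [Hs _ HcT] := HT T HTin.
  split.
  + exact: setSD.
  + have [a /andP [Ha Hal]] := Hoth T HTin; exists a; rewrite !inE Ha andbT.
    by [].
  + apply: (conn_remove_leaf (p := p)) HcT => q Hq Hlq.
    exact: Hleaf (subsetP Hs q Hq) Hlq.
- move=> T1' T2' /mapP [T1 H1 ->] /mapP [T2 H2 ->].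
  have [a /andP [Ha1 Ha2]] := HP T1 T2 H1 H2.
  case: (eqVneq a l) => [Eal|Hal].
    exists p; rewrite !inE Hpl /=.
    by rewrite (HpT T1 H1) ?(HpT T2 H2) // -Eal.
  by exists a; rewrite !inE Hal Ha1 Ha2.
exists x => T HTin.
have := Hx (T :\ l) (map_f _ HTin).
by rewrite inE => /andP [].
Qed.

End Tree.

Section Bramble.
Variables (G : finType) (e : rel G) (I : finType) (te : rel I) (bag : I -> {set G}).
Hypothesis TD : tree_decomposition e te bag.

Definition TB (B : {set G}) : {set I} := [set i | [exists v, (v \in B) && (v \in bag i)]].

Lemma vert_conn (B : {set G}) y k m : y \in B -> y \in bag k -> y \in bag m ->
  connect (relY te (TB B)) k m.
Proof.
case: TD => _ _ _ Hv Hy Hk Hm.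
apply: (connect_sub _ (Hv y k m Hk Hm)) => a b /and3P [Hab Ha Hb].
apply: connect1; rewrite /relY Hab !inE /=.
by apply/andP; split; apply/existsP; exists y; rewrite Hy.
Qed.

Lemma TB_conn (B : {set G}) : connY e B -> connY te (TB B).
Proof.
move=> HB i j; rewrite !inE => /existsP [vi /andP [Hvi Hvii]] /existsP [vj /andP [Hvj Hvjj]].
have /connectP [s Hs Evj] := HB vi vj Hvi Hvj.
have aux : forall s y k, y \in B -> y \in bag k -> path (relY e B) y s ->
    forall j, last y s \in bag j -> connect (relY te (TB B)) k j.
  elim=> [|z s' IH] y k Hy Hyk /=.
    by move=> _ j' Hj'; apply: vert_conn Hy Hyk Hj'.
  move=> /andP [/and3P [Heyz _ Hz] Hp] j' Hj'.
  case: TD => _ _ He _.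
  have [m /andP [Hym Hzm]] := He y z Heyz.
  apply: connect_trans (vert_conn Hy Hyk Hym) _.
  exact: IH Hz Hzm Hp j' Hj'.
rewrite Evj in Hvjj; exact: (aux s vi i Hvi Hvii Hs j Hvjj).
Qed.

Lemma bramble (Bs : seq {set G}) : Bs != [::] ->
  (forall B, B \in Bs -> connY e B) ->
  (forall B B', B \in Bs -> B' \in Bs ->
     exists u v, [/\ u \in B, v \in B' & (u == v) || e u v]) ->
  exists i, forall B, B \in Bs -> exists v, (v \in B) && (v \in bag i).
Proof.
move=> Hne Hc Ht.
have TD' := TD; case: TD' => [[[Hsym Hirr] Hconn Hacyc] Hcov He Hv].
have [x Hx] : exists x, forall T, T \in [seq TB B | B <- Bs] -> x \in T.
  apply: (@helly I te Hsym Hirr Hacyc #|I| [set: I]).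
  - exact: max_card.
  - move=> a b _ _; apply: (connect_sub _ (Hconn a b)) => u v Huv.
    by apply: connect1; rewrite /relY Huv !inE.
  - by case: Bs Hne {Hc Ht}.
  - move=> T /mapP [B HB ->]; split.
    + exact: subsetT.
    + have [u [v [Hu _ _]]] := Ht B B HB HB.
      have [i Hi] := Hcov u; exists i; rewrite inE; apply/existsP; exists u.
      by rewrite Hu Hi.
    + exact: TB_conn (Hc B HB).
  - move=> T1 T2 /mapP [B1 H1 ->] /mapP [B2 H2 ->].
    have [u [v [Hu Hv' Huv]]] := Ht B1 B2 H1 H2.
    case/orP: Huv => [/eqP Euv|Heuv].
      have [i Hi] := Hcov u; exists i; rewrite !inE.
      by apply/andP; split; apply/existsP; exists u; rewrite Hi ?Hu // Euv Hv'.
    have [i /andP [Hi1 Hi2]] := He u v Heuv; exists i; rewrite !inE.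
    by apply/andP; split; apply/existsP; [exists u | exists v]; rewrite ?Hu ?Hv' ?Hi1 ?Hi2.
exists x => B HB.
have := Hx (TB B) (map_f _ HB).
by rewrite inE => /existsP.
Qed.

End Bramble.

Lemma bound_fin M (Q : nat -> nat -> Prop) :
  (forall x D D', D <= D' -> Q x D -> Q x D') ->
  (forall x, x < M -> exists D, Q x D) -> exists D, forall x, x < M -> Q x D.
Proof.
move=> Hmon; elim: M => [|M IH] H; first by exists 0.
have [D1 H1] := IH (fun x Hx => H x (ltnW Hx)).
have [D2 H2] := H M (ltnSn M).
exists (maxn D1 D2) => x; rewrite ltnS leq_eqVlt => /orP [/eqP ->|Hx].
  exact: Hmon (leq_maxr _ _) H2.
exact: Hmon (leq_maxl _ _) (H1 x Hx).
Qed.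

Lemma leq_sumn (Is : seq nat) i : i \in Is -> i <= sumn Is.
Proof.
elim: Is => [//|j Is IH]; rewrite inE => /orP [/eqP ->|Hi] /=; first exact: leq_addr.
exact: leq_trans (IH Hi) (leq_addl _ _).
Qed.

Section W.
Variables (adj : rel nat) (r : nat) (par dep pos : nat -> nat).
Hypothesis W_lw : layered_wheel adj r par dep pos.
Hypothesis W_proper : proper_lw adj dep.
Hypothesis W_girth : girth_ge adj 5.

Lemma adj_sym : symmetric adj. Proof. by case: W_lw => [[]]. Qed.
Lemma adj_irr : irreflexive adj. Proof. by case: W_lw => [[]]. Qed.

Lemma layer_fin d : exists M, forall v, dep v = d -> v < M.
Proof.
case: W_lw => _ [[Hr Hpar] [Hlf _]].
elim: d => [|d [M HM]].
  exists r.+1 => v Hv; case: (eqVneq v r) => [->//|Hvr].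
  by rewrite (Hpar v (elimN eqP Hvr)) in Hv.
have [D HD] : exists D, forall p, p < M -> forall c, c <> r -> par c = p -> c < D.
  apply: (@bound_fin M (fun p D => forall c, c <> r -> par c = p -> c < D)).
  - by move=> x D D' HDD' H c Hc Hp; apply: leq_trans (H c Hc Hp) HDD'.
  - move=> p _; have [m Hm] := Hlf p; by exists m.
exists D => v Hv.
have Hvr : v <> r by move=> E; rewrite E Hr in Hv.
apply: (HD (par v)) => //.
by apply: HM; move: Hv; rewrite (Hpar v Hvr) => -[].
Qed.

Lemma layers_fin (Is : seq nat) : exists M, forall v, dep v \in Is -> v < M.
Proof.
elim: Is => [|d Is [M HM]]; first by exists 0.
have [M' HM'] := layer_fin d.
exists (maxn M M') => v; rewrite inE => /orP [/eqP Hv|Hv].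
  exact: leq_trans (HM' v Hv) (leq_maxr _ _).
exact: leq_trans (HM v Hv) (leq_maxl _ _).
Qed.

Lemma no_C4 x y w w' : x != y -> w != w' -> adj w x -> adj w y -> adj w' x -> adj w' y -> False.
Proof.
move=> Hxy Hww Hwx Hwy Hw'x Hw'y.
have ne : forall a b, adj a b -> a != b.
  by move=> a b Hab; apply/eqP => E; rewrite E adj_irr in Hab.
apply: (W_girth (l := 4)) => //.
exists [:: x; w; y; w']; split=> //.
  rewrite /= !inE !negb_or Hxy Hww /= !andbT (ne _ _ Hwy) eq_sym (ne _ _ Hwx) eq_sym (ne _ _ Hw'x) /=.
  by rewrite eq_sym (ne _ _ Hw'y).
by rewrite /= adj_sym Hwx Hwy adj_sym Hw'y Hw'x.
Qed.

Lemma bound_common (Is : seq nat) : exists D, forall w x y, dep x \in Is -> dep y \in Is ->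
  x != y -> adj w x -> adj w y -> dep w < D.
Proof.
have [M HM] := layers_fin Is.
have [D HD] : exists D, forall x, x < M -> forall y, y < M -> forall w, x != y -> adj w x -> adj w y -> dep w < D.
  apply: (@bound_fin M (fun x D => forall y, y < M -> forall w, x != y -> adj w x -> adj w y -> dep w < D)).
- by move=> x D D' HDD' H y Hy w Hxy H1 H2; apply: leq_trans (H y Hy w Hxy H1 H2) HDD'.
- move=> x _.
  apply: (@bound_fin M (fun y D => forall w, x != y -> adj w x -> adj w y -> dep w < D)).
    by move=> y D D' HDD' H w Hxy H1 H2; apply: leq_trans (H w Hxy H1 H2) HDD'.
  move=> y _.
  case: (classic (exists w, [/\ x != y, adj w x & adj w y])) => [[w0 [Hxy H1 H2]]|Hno].
    exists (dep w0).+1 => w _ Hwx Hwy.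
    case: (eqVneq w w0) => [->//|Hww]; exfalso.
    exact: (no_C4 Hxy Hww Hwx Hwy H1 H2).
  by exists 0 => w Hxy H1 H2; exfalso; apply: Hno; exists w.
exists D => w x y Hx Hy Hxy H1 H2.
exact: (HD x (HM x Hx) y (HM y Hy) w Hxy H1 H2).
Qed.

Definition Pgood (Is : seq nat) : Prop :=
  forall w x y, dep w \in Is -> dep x \in Is -> dep y \in Is ->
  dep x < dep w -> dep y < dep w -> adj w x -> adj w y -> x = y.

Lemma build m : exists Is, [/\ uniq Is, size Is = m & Pgood Is].
Proof.
elim: m => [|m [Is [Hu Hs Hg]]]; first by exists [::].
have [D HD] := bound_common Is.
set d := maxn D (sumn Is).+1.
have Hd : forall i, i \in Is -> i < d.
  by move=> i Hi; apply: leq_trans (leq_maxr _ _); rewrite ltnS leq_sumn.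
have HDd : D <= d by apply: leq_maxl.
exists (d :: Is); split=> /=.
- rewrite Hu andbT; apply/negP => Hin; have := Hd d Hin; by rewrite ltnn.
- by rewrite Hs.
- move=> w x y; rewrite !inE => Hw Hx Hy Hxw Hyw Hwx Hwy.
  case/orP: Hw => [/eqP Ewd|Hw].
    have Hx' : dep x \in Is.
      by case/orP: Hx => // /eqP E; rewrite E Ewd ltnn in Hxw.
    have Hy' : dep y \in Is.
      by case/orP: Hy => // /eqP E; rewrite E Ewd ltnn in Hyw.
    case: (eqVneq x y) => // Hxy; exfalso.
    have := HD w x y Hx' Hy' Hxy Hwx Hwy.
    by rewrite Ewd ltnNge HDd.
  have Hwd := Hd _ Hw.
  have Hx' : dep x \in Is.
    case/orP: Hx => // /eqP E; rewrite E in Hxw.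
    by have := ltn_trans Hxw Hwd; rewrite ltnn.
  have Hy' : dep y \in Is.
    case/orP: Hy => // /eqP E; rewrite E in Hyw.
    by have := ltn_trans Hyw Hwd; rewrite ltnn.
  exact: Hg Hw Hx' Hy' Hxw Hyw Hwx Hwy.
Qed.

End W.

Theorem lemma5p3 (H : finType) (eH : rel H)
  (Hsimple : simple_graph eH) (Hne : 0 < #|H|)
  (Hgirth : girth_ge eH 5) (Hdeg : min_deg_ge eH 4)
  (adj : rel nat) (r : nat) (par dep pos : nat -> nat)
  (W_lw : layered_wheel adj r par dep pos) (W_proper : proper_lw adj dep)
  (W_girth : girth_ge adj 5) :
  forall t : nat, exists S : seq nat,
    H_free eH (induced_on adj S) /\ tw_ge (induced_on adj S) t.
Proof.
move=> t.
have [Is [Hu Hs Hg]] := build W_lw W_girth t.+1.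
have [M HM] := layers_fin W_lw Is.
have W_lw' := W_lw.
case: W_lw' => [[Hasym Hairr] [Hroot [Hlf [[Hposinj Hposord] [Hlayer [Hanc Hdeg2]]]]]].
set S := [seq v <- iota 0 M | dep v \in Is].
have memS : forall v, (v \in S) = (dep v \in Is).
  move=> v; rewrite mem_filter mem_iota add0n /=.
  by case H1: (dep v \in Is) => //=; rewrite HM.
have left_unique : forall u1 u2 v, consec dep pos u1 v -> consec dep pos u2 v -> u1 = u2.
  move=> u1 u2 v [D1 P1 N1] [D2 P2 N2].
  case: (eqVneq u1 u2) => // Hne12; exfalso.
  have Hp12 : pos u1 <> pos u2 by apply: Hposinj; [rewrite D1 D2 | apply/eqP].
  case: (ltngtP (pos u1) (pos u2)) => [Hlt|Hlt|Heq] //.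
    by apply: N1; exists u2; split => //; rewrite D1 D2.
  by apply: N2; exists u1; split => //; rewrite D1 D2.
exists S; split.
- move=> [f [finj fE]].
  have [h0 _] : exists h0 : H, true by move/card_gt0P: Hne => [h _]; exists h.
  pose key h := dep (val (f h)).
  have [hm _ Hm] := @arg_maxnP H h0 xpredT key isT.
  have [hs /eqP Hhs Hsmax] := @arg_maxnP H hm (fun h => key h == key hm)
     (fun h => pos (val (f h))) (eqxx _).
  have Hk : forall h, key h <= key hs by move=> h; rewrite Hhs; exact: Hm.
  have Hp : forall h, key h = key hs -> pos (val (f h)) <= pos (val (f hs)).
    by move=> h Hh; apply: Hsmax; rewrite /= Hh Hhs.
  have Hadj : forall y, eH hs y -> adj (val (f hs)) (val (f y)) by move=> y; rewrite fE.
  have Hneq : forall y, eH hs y -> val (f y) <> val (f hs).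
    move=> y Hy E; have := finj _ _ (val_inj E) => Ey.
    by case: Hsimple => _ Hirr; rewrite Ey Hirr in Hy.
  pose A := [set y | eH hs y && (key y == key hs)].
  pose B := [set y | eH hs y && (key y < key hs)].
  have HN : #|[set y | eH hs y]| <= #|A| + #|B|.
    apply: leq_trans (subset_leq_card (_ : _ \subset A :|: B)) _.
      apply/subsetP => y; rewrite !inE => Hy; rewrite Hy /= -leq_eqVlt.
      exact: Hk.
    by rewrite cardsU leq_subr.
  have HA : #|A| <= 1.
    apply/card_le1_eqP => y1 y2; rewrite !inE => /andP [H1 /eqP E1] /andP [H2 /eqP E2].
    have C : forall y, eH hs y -> key y = key hs -> consec dep pos (val (f y)) (val (f hs)).
      move=> y Hy Ey.
      have : consec dep pos (val (f hs)) (val (f y)) \/ consec dep pos (val (f y)) (val (f hs)).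
        by apply/(Hlayer (val (f hs)) (val (f y))); [rewrite -/(key hs) -/(key y) Ey | exact: Hadj].
      case=> // -[_ Hlt _]; exfalso.
      by have := Hp y Ey; rewrite leqNgt Hlt.
    have := left_unique _ _ _ (C _ H1 E1) (C _ H2 E2) => /val_inj /finj.
    by move=> ->.
  have HB : #|B| <= 1.
    apply/card_le1_eqP => y1 y2; rewrite !inE => /andP [H1 L1] /andP [H2 L2].
    have Hin : forall h, dep (val (f h)) \in Is by move=> h; rewrite -memS; exact: ssvalP.
    have := Hg _ _ _ (Hin hs) (Hin y1) (Hin y2) L1 L2 (Hadj _ H1) (Hadj _ H2).
    by move=> /val_inj /finj ->.
  have := leq_trans (Hdeg hs) (leq_trans HN (leq_add HA HB)).
  by [].
- move=> I te bag TD.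
  pose Bl d := [set u : seq_sub S | dep (val u) == d].
  have HinS : forall (u : seq_sub S), dep (val u) \in Is by move=> u; rewrite -memS; exact: ssvalP.
  have Hlc : forall d k (a b : seq_sub S), dep (val a) = d -> dep (val b) = d ->
      pos (val a) <= pos (val b) -> pos (val b) - pos (val a) <= k ->
      connect (relY (induced_on adj S) (Bl d)) a b.
    move=> d; elim=> [|k IH] a b Ha Hb Hab Hk.
      have Epos : pos (val a) = pos (val b) by lia.
      case: (eqVneq (val a) (val b)) => [/val_inj ->|Hne']; first exact: connect0.
      by exfalso; apply: (Hposinj _ _ _ (elimN eqP Hne') Epos); rewrite Ha Hb.
    case: (eqVneq (pos (val a)) (pos (val b))) => [Epos|Hnp].
      case: (eqVneq (val a) (val b)) => [/val_inj ->|Hne']; first exact: connect0.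
      by exfalso; apply: (Hposinj _ _ _ (elimN eqP Hne') Epos); rewrite Ha Hb.
    have Hlt : pos (val a) < pos (val b) by rewrite ltn_neqAle Hnp Hab.
    case: (classic (exists w, [/\ dep w = dep (val a), pos (val a) < pos w & pos w < pos (val b)])) =>
        [[w [Hw H1 H2]]|Hno].
      have wS : w \in S by rewrite memS Hw HinS.
      pose w' := (SeqSub wS : seq_sub S).
      have C1 : connect (relY (induced_on adj S) (Bl d)) a w'.
        apply: IH => //=; first by rewrite Hw Ha.
          exact: ltnW.
        change (pos w - pos (val a) <= k); lia.
      have C2 : connect (relY (induced_on adj S) (Bl d)) w' b.
        apply: IH => //=; first by rewrite Hw Ha.
          exact: ltnW.
        change (pos (val b) - pos w <= k); lia.
      exact: connect_trans C1 C2.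
    have Hc : consec dep pos (val a) (val b) by split => //; rewrite Ha Hb.
    apply: connect1; rewrite /relY /induced_on !inE Ha Hb eqxx !andbT.
    by apply/(Hlayer (val a) (val b)); [rewrite Ha Hb | left].
  have Hrsym : forall d, symmetric (relY (induced_on adj S) (Bl d)).
    move=> d x y; rewrite /relY /induced_on Hasym.
    by case: (x \in Bl d); case: (y \in Bl d); rewrite ?andbT ?andbF.
  have Hconn : forall d, connY (induced_on adj S) (Bl d).
    move=> d a b; rewrite !inE => /eqP Ha /eqP Hb.
    case: (leqP (pos (val a)) (pos (val b))) => Hab.
      exact: (Hlc d _ a b Ha Hb Hab (leqnn _)).
    rewrite (sym_connect_sym (Hrsym d)).
    exact: (Hlc d _ b a Hb Ha (ltnW Hab) (leqnn _)).
  have [i Hi] : exists i, forall B, B \in [seq Bl d | d <- Is] ->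
      exists v, (v \in B) && (v \in bag i).
    apply: (bramble TD).
    - by case: (Is) Hs.
    - by move=> B /mapP [d _ ->]; exact: Hconn.
    - move=> B B' /mapP [d Hd ->] /mapP [d' Hd' ->].
      case: (eqVneq d d') => [<-|Hdd].
        have [u [v [Hu1 _ _]]] := W_proper d d.+1 (@n_Sn d).
        have uS : u \in S by rewrite memS Hu1.
        by exists (SeqSub uS), (SeqSub uS); rewrite !inE /= Hu1 !eqxx.
      have [u [v [Hu1 Hv1 Huv]]] := W_proper d d' (elimN eqP Hdd).
      have uS : u \in S by rewrite memS Hu1.
      have vS : v \in S by rewrite memS Hv1.
      exists (SeqSub uS), (SeqSub vS); rewrite !inE /= Hu1 Hv1 !eqxx; split => //.
      by apply/orP; right.
  exists i.
  have Hsub : {subset Is <= [seq dep (val u) | u <- enum (bag i)]}.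
    move=> d Hd; have [v /andP [Hv1 Hv2]] := Hi _ (map_f _ Hd).
    apply/mapP; exists v; first by rewrite mem_enum.
    by move: Hv1; rewrite inE => /eqP.
  by have := uniq_leq_size Hu Hsub; rewrite size_map -cardE Hs.
Qed.
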